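(* Let $\Delta$ be a finite, flag, simply connected simplicial complex, with $\mathcal{P}_H$, $q$, $T$ and $p_n$ as in the context. There exists a constant $K$ such that $\mathrm{Area}_{\mathcal{P}_H}\big(p_n(q,\iota e)\,e^n\,p_n(\tau e,q)\big)\le K|n|^2$ for all $e\in\mathrm{Edge}(\Delta)$ and all $n\in\mathbb{Z}$.
   Context: $\mathrm{Edge}(\Delta)$ is the set of directed edges of $\Delta$; for $e$ in it, $\iota e$, $\tau e$ are its initial and terminal vertices and $\overline{e}$ is the reversed edge. $e_1\cdot\ldots\cdot e_l$ is a combinatorial path if $\tau e_i=\iota e_{i+1}$, and a combinatorial 1-cycle if also $\tau e_l=\iota e_1$. $\mathcal{P}_H=\langle\mathrm{Edge}(\Delta)\mid\mathcal{R}_H\rangle$ where $\mathcal{R}_H$ consists of the words $e\overline{e}$ ($e\in\mathrm{Edge}(\Delta)$) and $efg$, $e^{-1}f^{-1}g^{-1}$ for every combinatorial 1-cycle $e\cdot f\cdot g$. $\mathrm{Area}_{\mathcal{P}_H}(w)$ is the least $m$ such that $w$ is freely equal to $\prod_{i=1}^m x_ir_ix_i^{-1}$ with $r_i\in\mathcal{R}_H^{\pm1}$. For a letter $e$ and $k\in\mathbb{Z}$, $e^k$ is the word of $k$ copies of $e$ if $k\ge0$ and $|k|$ copies of $e^{-1}$ if $k<0$. Fix a vertex $q$ and a spanning tree $T$ of the 1-skeleton of $\Delta$; for $n\in\mathbb{Z}$ and vertices $u,v$, $p_n(u,v)=e_1^n\cdots e_l^n$ where $e_1\cdot\ldots\cdot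 e_l$ is the unique geodesic combinatorial path in $T$ from $u$ to $v$. *)

(* Defs.v *)
From Stdlib Require Import Relations.
From mathcomp Require Import all_boot all_algebra.
Set Implicit Arguments. Unset Strict Implicit. Unset Printing Implicit Defensive.
Import GRing.Theory Num.Theory.

Section Complex.
Variable V : finType.

Definition simplicial_complex (D : {set {set V}}) : Prop :=
  (forall s, s \in D -> s != set0) /\
  (forall s t : {set V}, s \in D -> t \subset s -> t != set0 -> t \in D) /\
  (forall v : V, [set v] \in D).

Definition flag (D : {set {set V}}) : Prop :=
  forall s : {set V}, s != set0 ->
    (forall x y, x \in s -> y \in s -> [set x; y] \in D) -> s \in D.

Definition is_edge (D : {set {set V}}) (e : V * V) : bool :=
  (e.1 != e.2) && ([set e.1; e.2] \in D).
Definition iota_e (e : V * V) : V := e.1.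
Definition tau_e (e : V * V) : V := e.2.
Definition rev_edge (e : V * V) : V * V := (e.2, e.1).

Fixpoint cpath_from (u : V) (p : seq (V * V)) (v : V) : bool :=
  if p is e :: p' then (e.1 == u) && cpath_from e.2 p' v else u == v.

Definition connected1 (D : {set {set V}}) : Prop :=
  forall u v : V, exists p, all (is_edge D) p && cpath_from u p v.

Inductive ep_step (D : {set {set V}}) : seq (V * V) -> seq (V * V) -> Prop :=
| EPback p1 p2 e : is_edge D e ->
    ep_step D (p1 ++ e :: rev_edge e :: p2) (p1 ++ p2)
| EPtri p1 p2 e f : is_edge D e -> is_edge D f -> e.2 = f.1 -> e.1 != f.2 ->
    [set e.1; e.2; f.2] \in D ->
    ep_step D (p1 ++ e :: f :: p2) (p1 ++ (e.1, f.2) :: p2).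

Definition ep_homotopic (D : {set {set V}}) := clos_refl_sym_trans _ (ep_step D).

Definition simply_connected (D : {set {set V}}) : Prop :=
  connected1 D /\
  forall u p, all (is_edge D) p -> cpath_from u p u -> ep_homotopic D p [::].

(** Spanning trees of the 1-skeleton, given by their sets of (undirected) edges. *)
Definition in_tree (T : {set {set V}}) (e : V * V) : bool :=
  (e.1 != e.2) && ([set e.1; e.2] \in T).

Definition spanning_tree (D T : {set {set V}}) : Prop :=
  (forall t, t \in T -> (t \in D) && (#|t| == 2)) /\
  (forall u v : V, exists p, all (in_tree T) p && cpath_from u p v) /\
  (forall c : seq V, 3 <= size c -> uniq c ->
      ~~ cycle (fun x y => [set x; y] \in T) c).

Definition tree_geodesic (T : {set {set V}}) (u v : V) (p : seq (V * V)) : Prop :=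
  all (in_tree T) p /\ cpath_from u p v /\
  forall p', all (in_tree T) p' -> cpath_from u p' v -> size p <= size p'.

(** Words in the free group on Edge(Delta): letter (e, true) = e,
    (e, false) = e^{-1}. *)
Definition letter := ((V * V) * bool)%type.
Definition inv_letter (a : letter) : letter := (a.1, ~~ a.2).
Definition inv_word (w : seq letter) : seq letter := rev (map inv_letter w).

Inductive free_step : seq letter -> seq letter -> Prop :=
| FreeStep u v a : free_step (u ++ a :: inv_letter a :: v) (u ++ v).

Definition free_eq := clos_refl_sym_trans _ free_step.

Definition relator (D : {set {set V}}) (r : seq letter) : Prop :=
  (exists e, is_edge D e /\ r = [:: (e, true); (rev_edge e, true)]) \/
  (exists e f g, [/\ is_edge D e, is_edge D f & is_edge D g] /\
     [/\ e.2 = f.1, f.2 = g.1 & g.2 = e.1] /\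
     (r = [:: (e, true); (f, true); (g, true)] \/
      r = [:: (e, false); (f, false); (g, false)])).

Definition relator_pm (D : {set {set V}}) (r : seq letter) : Prop :=
  relator D r \/ relator D (inv_word r).

(** [area_le D w m] <-> Area_{P_H}(w) <= m : w is freely equal to a product
    of at most m conjugates x r x^{-1} with r in R_H^{+-1}. *)
Definition area_le (D : {set {set V}}) (w : seq letter) (m : nat) : Prop :=
  exists cs : seq (seq letter * seq letter),
    size cs <= m /\
    (forall c, c \in cs -> all (fun l : letter => is_edge D l.1) c.1 /\ relator_pm D c.2) /\
    free_eq w (flatten [seq c.1 ++ c.2 ++ inv_word c.1 | c <- cs]).

Definition letter_pow (e : V * V) (k : int) : seq letter :=
  nseq `|k|%N (e, (0 <= k)%R).

(** p_n(u,v) = e_1^n ... e_l^n along the tree path p = e_1 ... e_l. *)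
Definition pn_word (p : seq (V * V)) (n : int) : seq letter :=
  flatten [seq letter_pow e n | e <- p].

End Complex.

(* Main.v *)
Require Import Defs.
From mathcomp Require Import all_boot all_algebra.
From mathcomp Require Import zify.
From Stdlib Require Import Relations Classical.
Set Implicit Arguments. Unset Strict Implicit. Unset Printing Implicit Defensive.

Section Helpers.
Variable V : finType.
Variable D : {set {set V}}.
Notation L := (letter V).

Definition valid (w : seq L) := all (fun l : L => is_edge D l.1) w.

Lemma free_refl (w : seq L) : free_eq w w. Proof. exact: rst_refl. Qed.
Lemma free_sym (a b : seq L) : free_eq a b -> free_eq b a. Proof. exact: rst_sym. Qed.
Lemma free_trans (a b c : seq L) : free_eq a b -> free_eq b c -> free_eq a c.
Proof. exact: rst_trans. Qed.

Lemma free_catl (x a b : seq L) : free_eq a b -> free_eq (x ++ a) (x ++ b).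
Proof.
elim=> {a b} [a b st | a | a b _ IH | a b c _ IH1 _ IH2].
- case: st => u v c; apply: rst_step; rewrite !catA; constructor.
- exact: free_refl.
- exact: free_sym.
- exact: free_trans IH2.
Qed.

Lemma free_catr (y a b : seq L) : free_eq a b -> free_eq (a ++ y) (b ++ y).
Proof.
elim=> {a b} [a b st | a | a b _ IH | a b c _ IH1 _ IH2].
- case: st => u v c; apply: rst_step; rewrite -!catA /=; constructor.
- exact: free_refl.
- exact: free_sym.
- exact: free_trans IH2.
Qed.

Lemma inv_letterK (a : L) : inv_letter (inv_letter a) = a.
Proof. by case: a => x []. Qed.

Lemma inv_word_cat (a b : seq L) : inv_word (a ++ b) = inv_word b ++ inv_word a.
Proof. by rewrite /inv_word map_cat rev_cat. Qed.

Lemma inv_wordK (w : seq L) : inv_word (inv_word w) = w.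
Proof.
rewrite /inv_word map_rev revK -map_comp.
by rewrite (eq_map (inv_letterK)) map_id.
Qed.

Lemma inv_word_cons (a : L) w : inv_word (a :: w) = inv_word w ++ [:: inv_letter a].
Proof. by rewrite -cat1s inv_word_cat. Qed.

Lemma inv_word_nil : inv_word ([::] : seq L) = [::].
Proof. by []. Qed.

Lemma free_cancel (w : seq L) : free_eq (w ++ inv_word w) [::].
Proof.
elim: w => [|a w IH]; first exact: free_refl.
rewrite inv_word_cons.
have -> : (a :: w) ++ inv_word w ++ [:: inv_letter a]
   = [:: a] ++ (w ++ inv_word w) ++ [:: inv_letter a] by rewrite /= catA.
apply: free_trans (free_catl _ (free_catr _ IH)) _.
apply: rst_step; exact: (FreeStep [::] [::] a).
Qed.

Lemma free_cancel' (w : seq L) : free_eq (inv_word w ++ w) [::].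
Proof. by have := free_cancel (inv_word w); rewrite inv_wordK. Qed.

Lemma valid_cat (a b : seq L) : valid (a ++ b) = valid a && valid b.
Proof. exact: all_cat. Qed.

Lemma valid_inv (w : seq L) : valid (inv_word w) = valid w.
Proof. by rewrite /valid /inv_word all_rev all_map; apply: eq_all => -[]. Qed.

Lemma relator_pm_inv (r : seq L) : relator_pm D r -> relator_pm D (inv_word r).
Proof. by case=> H; [right; rewrite inv_wordK | left]. Qed.

Definition cprod (cs : seq (seq L * seq L)) : seq L :=
  flatten [seq c.1 ++ c.2 ++ inv_word c.1 | c <- cs].

Lemma cprod_cat a b : cprod (a ++ b) = cprod a ++ cprod b.
Proof. by rewrite /cprod map_cat flatten_cat. Qed.

Definition arel (w1 w2 : seq L) (m : nat) :=
  exists cs : seq (seq L * seq L), size cs <= m /\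
    (forall c, c \in cs -> valid c.1 /\ relator_pm D c.2) /\
    free_eq w1 (cprod cs ++ w2).

Lemma arel_area w m : arel w [::] m -> area_le D w m.
Proof.
case=> cs [h1 [h2 h3]]; exists cs; split=> //; split=> //.
by move: h3; rewrite cats0.
Qed.

Lemma arel_mon w1 w2 m m' : m <= m' -> arel w1 w2 m -> arel w1 w2 m'.
Proof. move=> le [cs [h1 h2]]; exists cs; split=> //; exact: leq_trans le. Qed.

Lemma arel_refl w : arel w w 0.
Proof. exists [::]; split=> //; split=> //; exact: free_refl. Qed.

Lemma arel_trans w1 w2 w3 m1 m2 :
  arel w1 w2 m1 -> arel w2 w3 m2 -> arel w1 w3 (m1 + m2).
Proof.
case=> cs1 [s1 [v1 f1]] [cs2 [s2 [v2 f2]]].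
exists (cs1 ++ cs2); split; first by rewrite size_cat leq_add.
split.
  by move=> c; rewrite mem_cat => /orP [] ?; [apply: v1 | apply: v2].
rewrite cprod_cat -catA; exact: free_trans f1 (free_catl _ f2).
Qed.

Lemma arel_freel w0 w1 w2 m : free_eq w0 w1 -> arel w1 w2 m -> arel w0 w2 m.
Proof.
move=> f [cs [s [v h]]]; exists cs; split=> //; split=> //; exact: free_trans h.
Qed.

Lemma arel_freer w1 w2 w3 m : free_eq w2 w3 -> arel w1 w2 m -> arel w1 w3 m.
Proof.
move=> f [cs [s [v h]]]; exists cs; split=> //; split=> //.
exact: free_trans h (free_catl _ f).
Qed.

Lemma arel_rel r : relator_pm D r -> arel r [::] 1.
Proof.
move=> hr; exists [:: ([::], r)]; split=> //; split.
  by move=> c; rewrite inE => /eqP -> /=.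
by rewrite /cprod /= inv_word_nil !cats0; exact: free_refl.
Qed.

Lemma cprod_inv cs :
  cprod (rev [seq (c.1, inv_word c.2) | c <- cs]) = inv_word (cprod cs).
Proof.
elim: cs => [|c cs IH] //=.
rewrite rev_cons -cats1 cprod_cat IH.
rewrite {2}/cprod /= inv_word_cat !inv_word_cat inv_wordK /cprod /= cats0.
by rewrite -!catA.
Qed.

Lemma arel_sym w1 w2 m : arel w1 w2 m -> arel w2 w1 m.
Proof.
case=> cs [s [v h]].
exists (rev [seq (c.1, inv_word c.2) | c <- cs]); split.
  by rewrite size_rev size_map.
split.
  move=> c; rewrite mem_rev => /mapP [c0 hc0 ->] /=.
  by case: (v _ hc0) => ??; split=> //; apply: relator_pm_inv.
rewrite cprod_inv.
apply: free_trans (_ : free_eq _ (inv_word (cprod cs) ++ cprod cs ++ w2)) _.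
  rewrite catA; apply: free_sym; exact: (free_catr w2 (free_cancel' _)).
apply: free_catl; exact: free_sym.
Qed.

Lemma arel_catr y w1 w2 m : arel w1 w2 m -> arel (w1 ++ y) (w2 ++ y) m.
Proof.
case=> cs [s [v h]]; exists cs; split=> //; split=> //.
by rewrite catA; apply: free_catr.
Qed.

Lemma cprod_conj x cs :
  free_eq (cprod [seq (x ++ c.1, c.2) | c <- cs]) (x ++ cprod cs ++ inv_word x).
Proof.
elim: cs => [|c cs IH] /=.
  by rewrite /cprod /=; apply: free_sym; apply: free_cancel.
rewrite /cprod /= -/(cprod _) -/(cprod _).
apply: free_trans (free_catl _ IH) _.
set A := x ++ c.1 ++ c.2 ++ inv_word c.1.
set B := cprod cs ++ inv_word x.
have E := free_catl A (free_catr B (free_cancel' x)).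
rewrite inv_word_cat.
have -> : ((x ++ c.1) ++ c.2 ++ inv_word c.1 ++ inv_word x) ++ x ++ cprod cs ++ inv_word x
   = A ++ (inv_word x ++ x) ++ B by rewrite /A /B -!catA.
by have -> : x ++ ((c.1 ++ c.2 ++ inv_word c.1) ++ cprod cs) ++ inv_word x
   = A ++ [::] ++ B by rewrite /A /B -!catA.
Qed.

Lemma arel_catl x w1 w2 m : valid x -> arel w1 w2 m -> arel (x ++ w1) (x ++ w2) m.
Proof.
move=> vx [cs [s [v h]]].
exists [seq (x ++ c.1, c.2) | c <- cs]; split; first by rewrite size_map.
split.
  move=> c /mapP [c0 hc0 ->] /=.
  by case: (v _ hc0) => ??; rewrite valid_cat vx.
apply: free_trans (free_catl x h) _.
apply: free_trans (_ : free_eq _ ((x ++ cprod cs ++ inv_word x) ++ x ++ w2)) _.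
  have := free_catl (x ++ cprod cs) (free_catr w2 (free_cancel' x)).
  by rewrite -!catA /= => H; apply: free_sym.
apply: free_catr; apply: free_sym; apply: cprod_conj.
Qed.

End Helpers.


Section Pow.
Variable V : finType.
Variable D : {set {set V}}.
Notation L := (letter V).
Notation arel := (arel D).
Notation valid := (valid D).

Lemma nseqSr (x : L) k : nseq k.+1 x = nseq k x ++ [:: x].
Proof. by rewrite -addn1 nseqD. Qed.

Lemma valid_nseq (x : L) k : is_edge D x.1 -> valid (nseq k x).
Proof. by move=> h; elim: k => //= k ->; rewrite h. Qed.

Lemma back_pow (a b : L) k : is_edge D a.1 -> relator_pm D [:: a; b] ->
  arel (nseq k a ++ nseq k b) [::] k.
Proof.
move=> va hr; elim: k => [|k IH]; first exact: arel_refl.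
have -> : nseq k.+1 a ++ nseq k.+1 b = nseq k a ++ [:: a; b] ++ nseq k b
  by rewrite nseqSr -catA.
rewrite -add1n; apply: arel_trans IH.
have := arel_catl (valid_nseq k va) (arel_catr (nseq k b) (arel_rel hr)).
by [].
Qed.

Variables a b c c' : L.
Hypotheses (va : is_edge D a.1) (vb : is_edge D b.1) (vc : is_edge D c.1) (vc' : is_edge D c'.1).
Hypotheses (r1 : relator_pm D [:: a; b; c]) (r2 : relator_pm D [:: c; b; a])
  (r3 : relator_pm D [:: c; c']).

Lemma h1 : arel [:: a; b] [:: inv_letter c] 1.
Proof.
apply: arel_freel (_ : free_eq _ ([:: a; b; c] ++ [:: inv_letter c])) _.
  apply: free_sym; apply: rst_step; exact: (FreeStep [:: a; b] [::] c).
exact: (arel_catr _ (arel_rel r1)).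
Qed.

Lemma h2 : arel [:: b; a] [:: inv_letter c] 1.
Proof.
apply: arel_freel (_ : free_eq _ ([:: inv_letter c] ++ [:: c; b; a])) _.
  apply: free_sym; apply: rst_step.
  have := FreeStep [::] [:: b; a] (inv_letter c); rewrite inv_letterK; exact.
have := arel_catl (w1 := [:: c; b; a]) (x := [:: inv_letter c]) _ (arel_rel r2).
rewrite cats0; apply; by rewrite /valid /= vc.
Qed.

Lemma comm : arel [:: a; b] [:: b; a] 2.
Proof. exact: arel_trans h1 (arel_sym h2). Qed.

Lemma h3 : arel [:: inv_letter c] [:: c'] 1.
Proof.
apply: arel_sym.
apply: arel_freel (_ : free_eq _ ([:: inv_letter c] ++ [:: c; c'])) _.
  apply: free_sym; apply: rst_step.
  have := FreeStep [::] [:: c'] (inv_letter c); rewrite inv_letterK; exact.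
have := arel_catl (w1 := [:: c; c']) (x := [:: inv_letter c]) _ (arel_rel r3).
rewrite cats0; apply; by rewrite /valid /= vc.
Qed.

Lemma cm k : arel (nseq k a ++ [:: b]) (b :: nseq k a) (2 * k).
Proof.
elim: k => [|k IH]; first exact: arel_refl.
apply: arel_mon (_ : 2 * k + 2 <= _) _; first lia.
apply: arel_trans (_ : arel _ ([:: a] ++ b :: nseq k a) _) _.
  by apply: (arel_catl (x := [:: a]) _ IH); rewrite /valid /= va.
exact: (arel_catr (nseq k a) comm).
Qed.

Lemma mk k : arel (nseq k a ++ nseq k b) (flatten (nseq k [:: a; b])) (2 * k * k).
Proof.
elim: k => [|k IH]; first exact: arel_refl.
apply: arel_mon (_ : 2 * k + 2 * k * k <= _) _; first lia.
have -> : nseq k.+1 a ++ nseq k.+1 b = [:: a] ++ (nseq k a ++ [:: b]) ++ nseq k b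
  by rewrite /= -catA.
apply: arel_trans (_ : arel _ ([:: a] ++ (b :: nseq k a) ++ nseq k b) _) _.
  by apply: arel_catl; [rewrite /valid /= va | apply: arel_catr; apply: cm].
have := arel_catl (x := [:: a; b]) _ IH; apply; by rewrite /valid /= va vb.
Qed.

Lemma pw k : arel (flatten (nseq k [:: a; b])) (nseq k (inv_letter c)) k.
Proof.
elim: k => [|k IH]; first exact: arel_refl.
rewrite -add1n; apply: arel_trans (_ : arel _ ([:: inv_letter c] ++ flatten (nseq k [:: a; b])) _) _.
  exact: (arel_catr _ h1).
by apply: arel_catl IH; rewrite /valid /= vc.
Qed.

Lemma qw k : arel (nseq k (inv_letter c)) (nseq k c') k.
Proof.
elim: k => [|k IH]; first exact: arel_refl.
rewrite -add1n; apply: arel_trans (_ : arel _ ([:: c'] ++ nseq k (inv_letter c)) _) _.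
  exact: (arel_catr _ h3).
by apply: arel_catl IH; rewrite /valid /= vc'.
Qed.

Lemma tri k : arel (nseq k a ++ nseq k b) (nseq k c') (4 * k ^ 2).
Proof.
apply: arel_mon (_ : 2 * k * k + k + k <= _) _; first (rewrite expnS expn1; nia).
apply: arel_trans (qw k).
apply: arel_trans (pw k).
exact: mk.
Qed.

End Pow.


Section Main.
Variable V : finType.
Variable D : {set {set V}}.
Hypothesis hSC : simplicial_complex D.

Lemma edge_rev (e : V * V) : is_edge D e -> is_edge D (rev_edge e).
Proof.
rewrite /is_edge /= => /andP [h1 h2]; rewrite eq_sym h1 /=.
by rewrite setUC.
Qed.

Lemma sub_edge (x y z : V) : [set x; y; z] \in D -> x != z -> is_edge D (x, z).
Proof.
rewrite /is_edge /= => h hne; rewrite hne /=.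
apply: hSC.2.1 h _ _.
  by apply/subsetP => w; rewrite !inE => /orP [] ->; rewrite ?orbT.
by apply/set0Pn; exists x; rewrite !inE eqxx.
Qed.

Lemma rel_back (e : V * V) s : is_edge D e -> relator_pm D [:: (e, s); (rev_edge e, s)].
Proof.
move=> He; case: s.
  by left; left; exists e.
right; left; exists (rev_edge e); split; first exact: edge_rev.
by case: e He.
Qed.

Lemma pn_word_cat (p1 p2 : seq (V * V)) n : pn_word (p1 ++ p2) n = pn_word p1 n ++ pn_word p2 n.
Proof. by rewrite /pn_word map_cat flatten_cat. Qed.

Lemma valid_pn (p : seq (V * V)) n : all (is_edge D) p -> valid D (pn_word p n).
Proof.
elim: p => [|e p IH] //= /andP [he hp].
by rewrite valid_cat IH // valid_nseq.
Qed.

Lemma step_inv x y : ep_step D x y ->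
  (all (is_edge D) x = all (is_edge D) y) /\
  forall n, all (is_edge D) x -> arel D (pn_word x n) (pn_word y n) (4 * `|n|%N ^ 2).
Proof.
case=> [p1 p2 e He | p1 p2 e f He Hf Hef Hne Hset].
  split; first by rewrite !all_cat /= He edge_rev.
  move=> n hx.
  have vp1 : all (is_edge D) p1 by move: hx; rewrite all_cat => /andP [].
  have -> : pn_word (p1 ++ e :: rev_edge e :: p2) n =
     pn_word p1 n ++ (letter_pow e n ++ letter_pow (rev_edge e) n) ++ pn_word p2 n
    by rewrite pn_word_cat /= -catA.
  rewrite pn_word_cat; apply: arel_catl; first exact: valid_pn.
  have H := arel_catr (pn_word p2 n) (back_pow `|n|%N (_ : is_edge D (e, (0 <= n)%R).1) (rel_back (0 <= n)%R He)).
  apply: arel_mon (H He); by rewrite expnS expn1; nia.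
have Hg' : is_edge D (e.1, f.2) by apply: sub_edge Hset Hne.
have Hg : is_edge D (f.2, e.1) by apply: (edge_rev Hg').
split; first by rewrite !all_cat /= He Hf Hg'.
move=> n hx.
have vp1 : all (is_edge D) p1 by move: hx; rewrite all_cat => /andP [].
have -> : pn_word (p1 ++ e :: f :: p2) n =
     pn_word p1 n ++ (letter_pow e n ++ letter_pow f n) ++ pn_word p2 n
    by rewrite pn_word_cat /= -catA.
rewrite pn_word_cat /=; apply: arel_catl; first exact: valid_pn.
apply: arel_catr.
have R1 : forall s, relator_pm D [:: (e, s); (f, s); ((f.2, e.1), s)].
  case; left; right; exists e, f, (f.2, e.1); split=> //; split=> //; by [left | right].
have R2 : forall s, relator_pm D [:: ((f.2, e.1), s); (f, s); (e, s)].
  case; right; right; exists e, f, (f.2, e.1); split=> //; split=> //; by [left | right].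
have R3 : forall s, relator_pm D [:: ((f.2, e.1), s); ((e.1, f.2), s)].
  case; first by left; left; exists (f.2, e.1).
  by right; left; exists (e.1, f.2).
have := (@tri V D (e, (0 <= n)%R) (f, (0 <= n)%R) ((f.2, e.1), (0 <= n)%R) ((e.1, f.2), (0 <= n)%R) He Hf Hg Hg' (R1 _) (R2 _) (R3 _) `|n|%N).
exact.
Qed.

Lemma hom_inv x y : ep_homotopic D x y ->
  (all (is_edge D) x = all (is_edge D) y) /\
  exists c, forall n, all (is_edge D) x ->
    arel D (pn_word x n) (pn_word y n) (c * `|n|%N ^ 2).
Proof.
elim=> {x y} [x y st | x | x y _ [E [c IH]] | x y z _ [E1 [c1 IH1]] _ [E2 [c2 IH2]]].
- case: (step_inv st) => E H; split=> //; exists 4; exact: H.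
- split=> //; exists 0 => n _; exact: arel_refl.
- split=> //; exists c => n hy; apply: arel_sym; apply: IH; by rewrite E.
- split; first by rewrite E1.
  exists (c1 + c2) => n hx; rewrite mulnDl.
  apply: arel_trans (IH1 _ hx) (IH2 _ _); by rewrite -E1.
Qed.

End Main.

Lemma fin_bound (A : eqType) (s : seq A) (P : A -> nat -> Prop) :
  (forall a c c', c <= c' -> P a c -> P a c') ->
  (forall a, a \in s -> exists c, P a c) -> exists c, forall a, a \in s -> P a c.
Proof.
move=> mon; elim: s => [|a s IH] h; first by exists 0.
case: (h a (mem_head _ _)) => c0 h0.
case: IH => [b hb|c1 h1]; first by apply: h; rewrite inE hb orbT.
exists (c0 + c1) => b; rewrite inE => /orP [/eqP -> | hb].
  exact: mon (leq_addr _ _) h0.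
exact: mon (leq_addl _ _) (h1 _ hb).
Qed.

Definition allseqs (V : finType) (M : nat) : seq (seq (V * V)) :=
  flatten [seq [seq tval t | t <- enum {: k.-tuple (V * V)}] | k <- iota 0 M.+1].

Lemma mem_allseqs (V : finType) M (p : seq (V * V)) : size p <= M -> p \in allseqs V M.
Proof.
move=> hs; apply/flattenP.
exists [seq tval t | t <- enum {: (size p).-tuple (V * V)}].
  apply/mapP; exists (size p) => //; rewrite mem_iota /=; lia.
apply/mapP; exists (in_tuple p) => //; by rewrite mem_enum.
Qed.

Lemma cpath_cat (V : finType) (u v w : V) p p' :
  cpath_from u p v -> cpath_from v p' w -> cpath_from u (p ++ p') w.
Proof.
elim: p u => [|e p IH] u /=; first by move=> /eqP ->.
by case/andP => -> h1 h2; rewrite IH.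
Qed.


Theorem lemma4p7 (V : finType) (D : {set {set V}}) (q : V) (T : {set {set V}}) :
  simplicial_complex D -> flag D -> simply_connected D -> spanning_tree D T ->
  exists K : nat, forall (e : V * V) (n : int), is_edge D e ->
    forall p1 p2 : seq (V * V),
      tree_geodesic T q (iota_e e) p1 -> tree_geodesic T (tau_e e) q p2 ->
      area_le D (pn_word p1 n ++ letter_pow e n ++ pn_word p2 n) (K * `|n|%N ^ 2).
Proof.
move=> hSC hfl [hconn hsc] [hT1 [hT2 hT3]].
have [N hN] : exists N, forall uv : V * V, uv \in enum {: V * V} ->
    exists p, all (in_tree T) p && cpath_from uv.1 p uv.2 && (size p <= N).
  apply: fin_bound.
  - move=> uv c c' le [p /andP [/andP [h1 h2] h3]]; exists p.
    by rewrite h1 h2 (leq_trans h3 le).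
  - move=> [u v] _; case: (hT2 u v) => p hp; exists (size p), p; by rewrite hp leqnn.
have geo : forall u v p, tree_geodesic T u v p -> size p <= N.
  move=> u v p [_ [_ hmin]].
  case: (hN (u, v)) => [|p' /andP [/andP [h1 h2] h3]]; first by rewrite mem_enum.
  exact: leq_trans (hmin _ h1 h2) h3.
have [K hK] : exists K, forall x, x \in allseqs V (N + N).+1 ->
    (ep_homotopic D x [::] -> forall n, all (is_edge D) x ->
       area_le D (pn_word x n) (K * `|n|%N ^ 2)).
  apply: fin_bound.
  - move=> x c c' le H hh n hx; case: (H hh n hx) => cs [s r]; exists cs; split=> //.
    by apply: leq_trans s _; rewrite leq_mul2r le orbT.
  - move=> x _; case: (classic (ep_homotopic D x [::])) => hh; last by exists 0.
    case: (hom_inv hSC hh) => _ [c hc]; exists c => _ n hx; apply: arel_area; exact: hc.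
exists K => e n He p1 p2 g1 g2.
have tree_edge : forall p, all (in_tree T) p -> all (is_edge D) p.
  move=> p; apply: sub_all => f; rewrite /in_tree /is_edge => /andP [-> h] /=.
  by case/andP: (hT1 _ h).
have hx : all (is_edge D) (p1 ++ e :: p2).
  by rewrite all_cat /= He (tree_edge _ g1.1) (tree_edge _ g2.1).
have hc : cpath_from q (p1 ++ e :: p2) q.
  apply: cpath_cat g1.2.1 _; by rewrite /= eqxx g2.2.1.
have hs : size (p1 ++ e :: p2) <= (N + N).+1.
  rewrite size_cat /=; have := geo _ _ _ g1; have := geo _ _ _ g2; lia.
have := hK (p1 ++ e :: p2) (mem_allseqs hs) (hsc _ _ hx hc) n hx.
by rewrite pn_word_cat.
Qed.
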